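(* Let $(\mathcal{A}_\Lambda,\partial_\Lambda)$ be a filtered Chekanov–Eliashberg DGA over $\mathbb{Z}_2$ with generators $q_1,\dots,q_n$, let $\epsilon$ be an augmentation, and let $\bar\phi:\mathcal{A}_\Lambda\to\mathcal{A}_\Lambda$ be a tame isomorphism. If $\bar\phi$ is semimonotonic, then $(A_\Lambda^\bullet,\ \bar\phi_1^\epsilon\circ\partial_1^\epsilon\circ(\bar\phi_1^\epsilon)^{-1})$ is a well-defined persistence module of chain complexes, and $\bar\phi_1^\epsilon$ induces an isomorphism of persistence modules of chain complexes \[ \phi_1^{\epsilon,\bullet}:(A_\Lambda^\bullet,\partial_1^\epsilon)\to(A_\Lambda^\bullet,\ \bar\phi_1^\epsilon\circ\partial_1^\epsilon\circ(\bar\phi_1^\epsilon)^{-1}). \]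
   Context: A filtered Chekanov–Eliashberg DGA is a Chekanov–Eliashberg DGA $(\mathcal{A}_\Lambda,\partial_\Lambda)$ (free noncommutative graded algebra over $\mathbb{Z}_2$ on generators $q_1,\dots,q_n$) together with heights $h(q_i)>0$, extended by $h(\text{word})=$ sum of heights of its letters and $h(\text{sum})=$ max over nonzero terms, such that $\partial_\Lambda$ strictly decreases height. An augmentation is an algebra map $\epsilon:\mathcal{A}_\Lambda\to\mathbb{Z}_2$ vanishing on nonzero degrees with $\epsilon\circ\partial_\Lambda=0$; $\partial_1^\epsilon$ is the linearized differential on the vector space $A_\Lambda$ with basis $q_1,\dots,q_n$ (the length-one part of $\phi^\epsilon\partial_\Lambda(\phi^\epsilon)^{-1}$, where $\phi^\epsilon(q_i)=q_i+\epsilon(q_i)$). $A_\Lambda^\bullet$ is the persistence module with $A^t_\Lambda$ spanned by generators of height $\le t$. An elementary automorphism is a chain map of the form $q_j\mapsto q_j+u$, $q_i\mapsto q_i$ ($i\ne j$), with $u$ in the subalgebra generated by the $q_i$, $i\neq j$; it is semimonotonic if $u$ is a (sum of) word(s) in generators of height strictly less than $h(q_j)$. A tame isomorphism is a composition of elementary automorphisms (possibly followed by a relabeling isomorphism); it is semimonotonic if these elementary automorphisms can be taken semimonotonic. For an elementary automorphism $q\mapsto q+q_{i_1}\cdots q_{i_k}$ the induced linear map is $\bar\phi_1^\epsilon(q)=q+\sum_{\ell=1}^k\big(\prod_{m\neq\ell}\epsilon(q_{i_m})\big)q_{i_\ell}$ (identity on other generators, extended additively in $u$), and for a composition one composes the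 induced linear maps.
   Formalization: The final relabeling sends each generator to one of equal height, and in the composed map each later elementary automorphism is linearized at ε composed with the inverse of the earlier ones. Apart from conventions, each condition added here is assumed in the paper as well or is needed for the statement above to hold. *)

(* Defs.v *)
From HB Require Import structures.
From mathcomp Require Import all_boot all_order all_fingroup all_algebra.
Set Implicit Arguments.
Unset Strict Implicit.
Unset Printing Implicit Defensive.
Import Order.TTheory GRing.Theory Num.Theory.
Local Open Scope ring_scope.

(* The free noncommutative algebra Z_2<q_1,...,q_n>.                  *)
(* Generator q_i is encoded by i : 'I_n.  A word is a seq of letters; *)
(* an element of the algebra is a finite formal sum of words, encoded *)
(* as a seq of words; the Z_2-coefficient of a word w is the parity   *)
(* of its multiplicity.  Two encodings are equal in the algebra iff   *)
(* they have the same coefficients ([peq]).                           *)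
Section FreeAlg.
Variable n : nat.

Definition word := seq 'I_n.
Definition ncpoly := seq word.

Definition coef (p : ncpoly) (w : word) : bool := odd (count_mem w p).
Definition peq (p q : ncpoly) : Prop := forall w, coef p w = coef q w.

Definition pzero : ncpoly := [::].
Definition pone : ncpoly := [:: [::]].
Definition pgen (i : 'I_n) : ncpoly := [:: [:: i]].
Definition padd (p q : ncpoly) : ncpoly := p ++ q.
Definition pmul (p q : ncpoly) : ncpoly := [seq u ++ v | u <- p, v <- q].

Definition subst_word (f : 'I_n -> ncpoly) (w : word) : ncpoly :=
  foldr (fun i acc => pmul (f i) acc) pone w.
Definition subst (f : 'I_n -> ncpoly) (p : ncpoly) : ncpoly :=
  flatten (map (subst_word f) p).

(* derivation (Leibniz rule, no signs over Z_2) determined by d i = ∂ q_i *)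
Fixpoint deriv_word (d : 'I_n -> ncpoly) (w : word) : ncpoly :=
  match w with
  | [::] => pzero
  | i :: w' => padd (pmul (d i) [:: w']) (pmul (pgen i) (deriv_word d w'))
  end.
Definition deriv (d : 'I_n -> ncpoly) (p : ncpoly) : ncpoly :=
  flatten (map (deriv_word d) p).

(* ---------------- grading (in Z, or in Z/N when N > 0) ------------- *)
Definition wdeg (deg : 'I_n -> int) (w : word) : int := \sum_(i <- w) deg i.
Definition homog (N : nat) (deg : 'I_n -> int) (k : int) (p : ncpoly) : Prop :=
  forall w, coef p w -> (wdeg deg w == k %[mod N%:Z])%Z.

(* Chekanov-Eliashberg DGA (as an abstract semi-free DGA over Z_2):
   ∂ has degree -1 and ∂ ∘ ∂ = 0. *)
Definition is_DGA (N : nat) (deg : 'I_n -> int) (d : 'I_n -> ncpoly) : Prop :=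
  (forall i, homog N deg (deg i - 1) (d i)) /\
  (forall p, peq (deriv d (deriv d p)) pzero).

Definition hword (R : realFieldType) (h : 'I_n -> R) (w : word) : R :=
  \sum_(i <- w) h i.

(* heights positive, and ∂ strictly decreases height:
   h(∂x) < h(x) whenever ∂x <> 0, where h(sum) = max over nonzero terms *)
Definition is_filtered (R : realFieldType) (h : 'I_n -> R) (d : 'I_n -> ncpoly)
  : Prop :=
  (forall i, 0 < h i) /\
  (forall p w, coef (deriv d p) w ->
     exists2 w', coef p w' & hword h w < hword h w').

(* the algebra map eps : A -> Z_2 with eps(q_i) = eps i *)
Definition aug (eps : 'I_n -> bool) (p : ncpoly) : bool :=
  odd (count (fun w => all eps w) p).

Definition is_augmentation (N : nat) (deg : 'I_n -> int) (d : 'I_n -> ncpoly)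
  (eps : 'I_n -> bool) : Prop :=
  (forall i, eps i -> (deg i == 0 %[mod N%:Z])%Z) /\
  (forall p, aug eps (deriv d p) = false).

(* phi^eps (q_i) = q_i + eps(q_i); its inverse q_i |-> q_i - eps(q_i),
   which over Z_2 is q_i + eps(q_i) *)
Definition phi_eps (eps : 'I_n -> bool) (i : 'I_n) : ncpoly :=
  padd (pgen i) (if eps i then pone else pzero).
Definition phi_eps_inv (eps : 'I_n -> bool) (i : 'I_n) : ncpoly :=
  padd (pgen i) (if eps i then pone else pzero).

(* Linear maps on A_Lambda = Z_2^n (basis q_1..q_n) are matrices acting on
   row vectors: v |-> v *m M, M i k = coefficient of q_k in the image of q_i. *)

Definition lin_diff (d : 'I_n -> ncpoly) (eps : 'I_n -> bool) : 'M['F_2]_n :=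
  \matrix_(i, k)
    ((coef (subst (phi_eps eps) (deriv d (subst (phi_eps_inv eps) (pgen i))))
           [:: k] : nat)%:R).

(* elementary automorphism (j, u) : q_j |-> q_j + u, q_i |-> q_i (i <> j) *)
Definition elementary (N : nat) (deg : 'I_n -> int) (e : 'I_n * ncpoly) : Prop :=
  (forall w, coef e.2 w -> e.1 \notin w) /\ homog N deg (deg e.1) e.2.

Definition semimonotonic_elem (R : realFieldType) (h : 'I_n -> R)
  (e : 'I_n * ncpoly) : Prop :=
  forall w, coef e.2 w -> forall i, i \in w -> h i < h e.1.

(* relabeling isomorphism q_i |-> q_{sigma i}, graded *)
Definition relabeling (N : nat) (deg : 'I_n -> int) (sigma : {perm 'I_n}) : Prop :=
  forall i, (deg (sigma i) == deg i %[mod N%:Z])%Z.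

(* induced linear map of an elementary automorphism q_j |-> q_j + u:
   q_j |-> q_j + sum_{words q_{i_1}..q_{i_k} of u} sum_l
                 (prod_{m <> l} eps(q_{i_m})) q_{i_l} *)
Definition elem_lin (eps : 'I_n -> bool) (j : 'I_n) (u : ncpoly) : 'M['F_2]_n :=
  1%:M + \matrix_(i, k)
    (if i == j then
       \sum_(w <- u) \sum_(l < size w)
          ((\prod_(m < size w | m != l) ((eps (nth j w m) : nat)%:R))
           * ((nth j w l == k : nat)%:R))
     else 0).

(* augmentation of the target DGA of q_j |-> q_j + u : eps o phi^{-1},
   where phi^{-1}(q_j) = q_j + u over Z_2 *)
Definition push_aug (eps : 'I_n -> bool) (j : 'I_n) (u : ncpoly) : 'I_n -> bool :=
  fun i => if i == j then eps j (+) aug eps u else eps i.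

(* induced linear map of the composition e_1, then e_2, ...
   (row-vector convention: first map is the leftmost factor) *)
Fixpoint tame_lin_elems (eps : 'I_n -> bool) (es : seq ('I_n * ncpoly))
  : 'M['F_2]_n :=
  match es with
  | [::] => 1%:M
  | e :: es' => elem_lin eps e.1 e.2 *m tame_lin_elems (push_aug eps e.1 e.2) es'
  end.

Definition tame_lin (eps : 'I_n -> bool) (es : seq ('I_n * ncpoly))
  (sigma : {perm 'I_n}) : 'M['F_2]_n :=
  tame_lin_elems eps es *m perm_mx sigma.

Definition inA (R : realFieldType) (h : 'I_n -> R) (t : R) (v : 'rV['F_2]_n)
  : Prop := forall i, v 0 i != 0 -> h i <= t.

Definition homogv (N : nat) (deg : 'I_n -> int) (k : int) (v : 'rV['F_2]_n)
  : Prop := forall i, v 0 i != 0 -> (deg i == k %[mod N%:Z])%Z.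

End FreeAlg.

(* Main.v *)
Require Import Defs.
From mathcomp Require Import all_boot all_order all_fingroup all_algebra.
From mathcomp Require Import ring lra.
Set Implicit Arguments.
Unset Strict Implicit.
Unset Printing Implicit Defensive.
Local Notation deriv := Defs.deriv.
Local Notation coef := Defs.coef.
Local Notation subst := Defs.subst.
Import Order.TTheory GRing.Theory Num.Theory.
Local Open Scope ring_scope.

Lemma F2_addxx (x : 'F_2) : x + x = 0.
Proof. case: x => [[|[|//]]] ? ; by apply/val_inj. Qed.

Lemma F2_neq0 (x : 'F_2) : x != 0 -> x = 1.
Proof. case: x => [[|[|//]]] ? ; first by rewrite (_ : Ordinal _ = 0) //; apply/val_inj.
 by move=> _; apply/val_inj. Qed.

Lemma F2_muln (x : 'F_2) c : x *+ c = x *+ odd c.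
Proof.
elim: c {-2}c (leqnn c) => [|m IH] c Hc.
  by move: Hc; rewrite leqn0 => /eqP ->.
case: c Hc => [|[|c]] Hc //=.
rewrite !mulrS addrA F2_addxx add0r (IH c) ?negbK //.
by apply: ltnW; move: Hc; rewrite ltnS.
Qed.

Lemma F2_natr_odd m : ((odd m : nat)%:R : 'F_2) = m%:R.
Proof. by rewrite -[RHS]mulr1n -[LHS]mulr1n -F2_muln. Qed.

Lemma F2_nat_bool (b : bool) : (((b : nat)%:R : 'F_2) != 0) = b.
Proof. by case: b. Qed.

Lemma sum_F2_ex (T : eqType) (p : seq T) (f : T -> 'F_2) :
  \sum_(w <- p) f w != 0 -> exists w, odd (count_mem w p) && (f w != 0).
Proof.
elim: {p}(size p) {-2}p (leqnn (size p)) => [|m IH] p Hs H.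
  by move: Hs H; case: p => // _; rewrite big_nil eqxx.
case: p Hs H => [|a p'] Hs H; first by rewrite big_nil eqxx in H.
case Ha: (odd (count_mem a (a :: p')) && (f a != 0)); first by exists a.
move: H; rewrite (bigID (pred1 a)) /=.
rewrite (eq_bigr (fun _ => f a)); last by move=> i /eqP ->.
rewrite big_const_seq -[iter _ _ _]/((fun c => iter c (+%R (f a)) 0) _).
have -> : iter (count (pred1 a) (a :: p')) (+%R (f a)) 0 = 0.
  have E : forall c, iter c (+%R (f a)) 0 = f a *+ c by elim=> //= c ->; rewrite mulrS.
  rewrite E F2_muln.
  move: Ha; rewrite /= eq_refl /=; case: (f a =P 0) => [-> | _]; first by rewrite mul0rn.
  by rewrite andbT => ->.
rewrite add0r -big_filter => H.
have Hs' : (size [seq x <- a :: p' | x != a] <= m)%N.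
  rewrite /= eqxx /= size_filter; move: Hs; rewrite /= ltnS => Hs.
  exact: leq_trans (count_size _ _) Hs.
have [w /andP[Hw Hf]] := IH _ Hs' H.
have wa : w != a.
  apply/negP=> /eqP E; move: Hw; rewrite E count_filter.
  by rewrite (eq_count (a2 := pred0)) ?count_pred0 // => x /=; case: eqP => // ->; rewrite eqxx.
exists w; rewrite Hf andbT; move: Hw; rewrite count_filter.
by rewrite (eq_count (a2 := pred1 w)) // => x /=; case: eqP => // ->; rewrite wa.
Qed.
Lemma coef_cat n (p q : ncpoly n) w : coef (p ++ q) w = coef p w (+) coef q w.
Proof. by rewrite /coef count_cat oddD. Qed.

Lemma F2_add_eq0 (x y : 'F_2) : x + y = 0 -> x = y.
Proof. by move/eqP; rewrite addr_eq0 => /eqP ->; apply/eqP; rewrite eq_sym -addr_eq0 F2_addxx. Qed.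

Lemma sum_peq n (f : word n -> 'F_2) p q : peq p q ->
  \sum_(w <- p) f w = \sum_(w <- q) f w.
Proof.
move=> Hpq; apply: F2_add_eq0; rewrite -big_cat; apply/eqP; apply: contraT => H.
have [w /andP[Hw _]] := @sum_F2_ex _ _ _ H.
by move: Hw; rewrite -/(coef _ _) coef_cat Hpq addbb.
Qed.

Lemma pmul_cons n (a : word n) p q : pmul (a :: p) q = [seq a ++ v | v <- q] ++ pmul p q.
Proof. by []. Qed.

Lemma pmul_nil1 n (p : ncpoly n) : pmul p [:: [::]] = p.
Proof. by elim: p => //= a p IH; rewrite pmul_cons /= cats0 IH. Qed.

Lemma pmul_nil0 n (p : ncpoly n) : pmul p [::] = [::].
Proof. by elim: p. Qed.

Lemma count_pmul n (P : pred (word n)) p q :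
  count P (pmul p q) = (\sum_(u <- p) count (fun v => P (u ++ v)) q)%N.
Proof. by elim: p => [|a p IH]; rewrite ?big_nil ?big_cons // pmul_cons count_cat count_map IH. Qed.

Lemma natr_count_flatten n (P : pred (word n)) (g : word n -> ncpoly n) p :
  ((count P (flatten (map g p)))%:R : 'F_2) = \sum_(w <- p) (count P (g w))%:R.
Proof. by elim: p => [|a p IH]; rewrite ?big_nil ?big_cons //= count_cat natrD IH. Qed.

Lemma count_andb T (b : bool) (P : pred T) s : count (fun x => b && P x) s = (b * count P s)%N.
Proof. by case: b => /=; rewrite ?mul1n ?mul0n // count_pred0. Qed.

Lemma natr_andb (b c : bool) : ((b && c : nat)%:R : 'F_2) = (b : nat)%:R * (c : nat)%:R.
Proof. by case: b; case: c; rewrite /= ?mulr1 ?mulr0. Qed.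

Section Lin.
Variable n : nat.
Variable eps : 'I_n -> bool.

Fixpoint linf (w : word n) (k : 'I_n) : 'F_2 :=
  match w with
  | [::] => 0
  | a :: w' => (a == k : nat)%:R * (all eps w' : nat)%:R + (eps a : nat)%:R * linf w' k
  end.

Definition Le (p : ncpoly n) k := \sum_(w <- p) linf w k.
Definition Ae (p : ncpoly n) : 'F_2 := \sum_(w <- p) (all eps w : nat)%:R.

Lemma Ae_aug p : Ae p = (aug eps p : nat)%:R.
Proof.
rewrite /aug F2_natr_odd /Ae.
by elim: p => [|a p IH]; rewrite ?big_nil ?big_cons //= natrD IH.
Qed.

Lemma linf_cat u v k : linf (u ++ v) k =
  (all eps u : nat)%:R * linf v k + (all eps v : nat)%:R * linf u k.
Proof.
elim: u => [|a u IH] /=; first by rewrite mul1r mulr0 addr0.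
rewrite IH all_cat !natr_andb.
set x := (a == k : nat)%:R.
set A := (all eps u : nat)%:R; set B := (all eps v : nat)%:R; set E := (eps a : nat)%:R.
set Lv := linf v k; set Lu := linf u k.
ring.
Qed.

Lemma Le_cat p q k : Le (p ++ q) k = Le p k + Le q k.
Proof. by rewrite /Le big_cat. Qed.

Lemma Le_pmul p q k : Le (pmul p q) k = Ae p * Le q k + Ae q * Le p k.
Proof.
elim: p => [|a p IH]; first by rewrite /Le /Ae !big_nil mul0r mulr0 addr0.
rewrite pmul_cons Le_cat IH /Le /Ae big_map !big_cons.
under eq_bigr do rewrite linf_cat.
rewrite big_split /= -mulr_sumr -mulr_suml.
rewrite mulrDl mulrDr -!addrA; congr (_ + _); rewrite !addrA; congr (_ + _).
by rewrite addrC mulrC.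
Qed.

Lemma count0_subst w :
  count_mem [::] (subst_word (phi_eps eps) w) = all eps w.
Proof.
elim: w => [|a w IH] //=.
rewrite count_pmul /phi_eps /padd big_cat big_cons big_nil /=.
rewrite (eq_count (a2 := pred0)) // count_pred0 add0n.
by case: (eps a); rewrite /= ?big_cons ?big_nil /= ?addn0 ?IH.
Qed.

Lemma count1_subst w k :
  ((count_mem [:: k] (subst_word (phi_eps eps) w))%:R : 'F_2) = linf w k.
Proof.
elim: w => [|a w IH] //=.
rewrite count_pmul /phi_eps /padd big_cat big_cons big_nil /= addn0.
rewrite (eq_count (a2 := fun v => (a == k) && (v == [::]))); last by move=> v; rewrite eqseq_cons.
rewrite count_andb count0_subst natrD natrM.
by case: (eps a); rewrite /= ?big_cons ?big_nil /= ?addn0 ?IH ?mul1r ?mul0r ?addr0.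
Qed.

Lemma Le_coef p k : ((coef (subst (phi_eps eps) p) [:: k] : nat)%:R : 'F_2) = Le p k.
Proof.
rewrite /coef F2_natr_odd /subst natr_count_flatten /Le.
by apply: eq_bigr => w _; rewrite count1_subst.
Qed.

Lemma linf_split w k : linf w k != 0 ->
  exists w1 w2, [/\ w = w1 ++ k :: w2, all eps w1 & all eps w2].
Proof.
elim: w => [|a w IH] /=; first by [].
move=> H; have [Hak|Hak] := boolP ((a == k) && all eps w).
  by move/andP: Hak => [/eqP <- Hw]; exists [::], w.
move: H Hak; case: (a == k); case: (all eps w); case Ea: (eps a);
  rewrite /= ?mul1r ?mul0r ?add0r ?addr0 ?eqxx // => H _;
  have [w1 [w2 [-> H1 H2]]] := IH H; by exists (a :: w1), w2; rewrite /= Ea.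
Qed.

End Lin.

Lemma deriv_cat n (d : 'I_n -> ncpoly n) p q : deriv d (p ++ q) = deriv d p ++ deriv d q.
Proof. by rewrite /deriv map_cat flatten_cat. Qed.

Lemma deriv_pgen n (d : 'I_n -> ncpoly n) i : deriv d (pgen i) = d i.
Proof. by rewrite /deriv /= cats0 /padd pmul_nil1 pmul_nil0 cats0. Qed.

Lemma deriv_single n (d : 'I_n -> ncpoly n) w : deriv d [:: w] = deriv_word d w.
Proof. by rewrite /deriv /= cats0. Qed.

Lemma subst_pgen n (f : 'I_n -> ncpoly n) i : subst f (pgen i) = f i.
Proof. by rewrite /subst /= cats0 /pone pmul_nil1. Qed.

Lemma deriv_phi_inv n (d : 'I_n -> ncpoly n) eps i : deriv d (phi_eps_inv eps i) = d i.
Proof.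
rewrite /phi_eps_inv /padd deriv_cat deriv_pgen.
by case: (eps i); rewrite /deriv /= ?cats0.
Qed.

Lemma lin_diffE n (d : 'I_n -> ncpoly n) eps i k : lin_diff d eps i k = Le eps (d i) k.
Proof. by rewrite mxE subst_pgen deriv_phi_inv Le_coef. Qed.

Section Der.
Variable n : nat.
Variable eps : 'I_n -> bool.
Variable d : 'I_n -> ncpoly n.
Hypothesis Haug : forall p, aug eps (deriv d p) = false.

Lemma Le_deriv_word w k :
  Le eps (deriv_word d w) k = \sum_j linf eps w j * Le eps (d j) k.
Proof.
elim: w => [|a w IH].
  by rewrite /Le big_nil; symmetry; apply: big1 => j _; rewrite mul0r.
rewrite [deriv_word _ _]/= /padd Le_cat !Le_pmul.
have A1 : Ae eps (d a) = 0 by rewrite Ae_aug -(deriv_pgen d) Haug.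
have A2 : Ae eps (deriv_word d w) = 0 by rewrite Ae_aug -deriv_single Haug.
rewrite A1 A2 mul0r mul0r add0r addr0 IH.
rewrite /Ae /pgen !big_cons !big_nil !addr0 /= andbT.
rewrite [RHS](eq_bigr (fun j => (a == j : nat)%:R * (all eps w : nat)%:R * Le eps (d j) k
   + (eps a : nat)%:R * (linf eps w j * Le eps (d j) k))); last first.
  by move=> j _ /=; rewrite mulrDl mulrA.
rewrite big_split /= -mulr_sumr; congr (_ + _).
rewrite (bigD1 a) //= eqxx mul1r big1 ?addr0 //.
by move=> j /negbTE; rewrite eq_sym => ->; rewrite !mul0r.
Qed.

Lemma Le_deriv p k : Le eps (deriv d p) k = \sum_j Le eps p j * Le eps (d j) k.
Proof.
rewrite /deriv {1}/Le big_flatten big_map /=.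
under eq_bigr do rewrite -/(Le eps _ k) Le_deriv_word.
rewrite exchange_big /=; apply: eq_bigr => j _.
by rewrite /Le mulr_suml.
Qed.

Hypothesis Hdd : forall p, peq (deriv d (deriv d p)) (pzero n).

Lemma DD_entry i k : \sum_j Le eps (d i) j * Le eps (d j) k = 0.
Proof.
by rewrite -Le_deriv -(deriv_pgen d i) /Le (@sum_peq _ _ _ _ (Hdd (pgen i))) big_nil.
Qed.

End Der.

Lemma sum_ord_ex (I : finType) (F : I -> 'F_2) : \sum_(i : I) F i != 0 -> exists i, F i != 0.
Proof.
move=> H; case: (pickP (fun i => F i != 0)) => [i Hi|H0]; first by exists i; exact: Hi.
by move: H; rewrite big1 ?eqxx // => i _; apply/eqP; apply/negbFE; exact: H0 i.
Qed.

Lemma mulF2_neq0 (x y : 'F_2) : x * y != 0 -> x != 0 /\ y != 0.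
Proof. by rewrite mulf_eq0 negb_or => /andP. Qed.

Lemma mulmx_ent_ex m1 n m2 (A : 'M['F_2]_(m1, n)) (B : 'M['F_2]_(n, m2)) i k : (A *m B) i k != 0 ->
  exists m, A i m != 0 /\ B m k != 0.
Proof. by rewrite mxE => /sum_ord_ex [m /mulF2_neq0 H]; exists m. Qed.

Arguments mulmx_ent_ex {m1 n m2 A B i k}.

Lemma sum_mod0 (I : Type) (r : seq I) (P : pred I) (F : I -> int) (N : int) :
  (forall i, P i -> (F i %% N = 0)%Z) -> ((\sum_(i <- r | P i) F i) %% N = 0)%Z.
Proof.
move=> H; apply: (big_ind (fun x => (x %% N = 0)%Z)) => //; first exact: mod0z.
by move=> x y Hx Hy; rewrite -modzDml Hx add0r Hy.
Qed.

Section Ent.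
Variables (R : realFieldType) (n : nat) (N : nat) (deg : 'I_n -> int) (h : 'I_n -> R).

Definition FPent (M : 'M['F_2]_n) := forall i k, M i k != 0 -> h k <= h i.
Definition HPent (s : int) (M : 'M['F_2]_n) :=
  forall i k, M i k != 0 -> ((deg k) %% N = (deg i + s) %% N)%Z.

Lemma FP_mul A B : FPent A -> FPent B -> FPent (A *m B).
Proof.
move=> HA HB i k /mulmx_ent_ex [m [H1 H2]].
exact: le_trans (HB _ _ H2) (HA _ _ H1).
Qed.

Lemma HP_mul s t A B : HPent s A -> HPent t B -> HPent (s + t) (A *m B).
Proof.
move=> HA HB i k /mulmx_ent_ex [m [H1 H2]].
by rewrite (HB _ _ H2) -modzDml (HA _ _ H1) modzDml addrA.
Qed.

Lemma FP1 : FPent 1%:M.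
Proof. move=> i k; rewrite mxE; case: (i =P k) => [-> _|_]; [exact: lexx | by rewrite mulr0n eqxx]. Qed.

Lemma HP1 : HPent 0 1%:M.
Proof. move=> i k; rewrite mxE addr0; case: (i =P k) => [-> _|_]; [by [] | by rewrite mulr0n eqxx]. Qed.

Lemma inA_mul M t v : FPent M -> inA h t v -> inA h t (v *m M).
Proof.
move=> HM Hv k /mulmx_ent_ex [m [H1 H2]].
exact: le_trans (HM _ _ H2) (Hv _ H1).
Qed.

Lemma homogv_mul M s k v : HPent s M -> homogv N deg k v -> homogv N deg (k + s) (v *m M).
Proof.
move=> HM Hv i /mulmx_ent_ex [m [H1 H2]].
apply/eqP; rewrite (HM _ _ H2) -modzDml (eqP (Hv _ H1)) modzDml //.
Qed.

Lemma FP_perm (s : {perm 'I_n}) : (forall i, h (s i) = h i) -> FPent (perm_mx s).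
Proof. move=> Hs i k; rewrite !mxE; case: (s i =P k) => [<- _|_]; [by rewrite Hs | by rewrite mulr0n eqxx]. Qed.

Lemma HP_perm (s : {perm 'I_n}) : (forall i, (deg (s i) == deg i %[mod N%:Z])%Z) ->
  HPent 0 (perm_mx s).
Proof. move=> Hs i k; rewrite !mxE addr0; case: (s i =P k) => [<- _|_]; [exact/eqP | by rewrite mulr0n eqxx]. Qed.

End Ent.

Lemma addF2_neq0 (x y : 'F_2) : x + y != 0 -> x != 0 \/ y != 0.
Proof. by case: (x =P 0) => [->|/eqP]; [rewrite add0r; right | left]. Qed.

Lemma invmx_uniq n (M X : 'M['F_2]_n) : M *m X = 1%:M -> invmx M = X.
Proof.
move=> H; have [Mu _] := mulmx1_unit H.
by rewrite -[invmx M]mulmx1 -H mulmxA mulVmx // mul1mx.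
Qed.

Section Elem.
Variables (R : realFieldType) (n : nat) (N : nat) (deg : 'I_n -> int) (h : 'I_n -> R).

Definition Peps (eps : 'I_n -> bool) := forall i, eps i -> (deg i %% N = 0)%Z.

Definition Sf (eps : 'I_n -> bool) (j : 'I_n) (u : ncpoly n) (k : 'I_n) : 'F_2 :=
  \sum_(w <- u) \sum_(l < size w)
          ((\prod_(m < size w | m != l) ((eps (nth j w m) : nat)%:R))
           * ((nth j w l == k : nat)%:R)).

Definition Nm eps j u : 'M['F_2]_n := \matrix_(i, k) (if i == j then Sf eps j u k else 0).

Lemma elem_linE eps j u : elem_lin eps j u = 1%:M + Nm eps j u.
Proof. by []. Qed.

Lemma Sf_ex eps j u k : Sf eps j u k != 0 -> exists w (l : 'I_(size w)),
  [/\ coef u w, nth j w l = k & forall m : 'I_(size w), m != l -> eps (nth j w m)].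
Proof.
move/sum_F2_ex => [w /andP [Hc H]].
move/sum_ord_ex: H => [l /mulF2_neq0 [Hp Hk]].
exists w, l; split => //; first by move: Hk; rewrite F2_nat_bool => /eqP.
by move=> m Hm; move/prodf_neq0: Hp => /(_ m Hm); rewrite F2_nat_bool.
Qed.

Lemma wdeg_nth (w : word n) j (l : 'I_(size w)) :
  wdeg deg w = deg (nth j w l) + \sum_(m < size w | m != l) deg (nth j w m).
Proof. by rewrite /wdeg (big_nth j) big_mkord (bigD1 l). Qed.

Lemma wdeg_all0 eps (w : word n) : Peps eps -> all eps w -> (wdeg deg w %% N = 0)%Z.
Proof. by move=> HP /allP Ha; rewrite /wdeg big_seq; apply: sum_mod0 => i /Ha; exact: HP. Qed.

Lemma Sf_props eps j u k : elementary N deg (j, u) -> Peps eps -> Sf eps j u k != 0 ->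
  exists w, [/\ coef u w, k \in w & (deg k %% N = deg j %% N)%Z].
Proof.
move=> Hel HP /Sf_ex [w [l [Hc Hk He]]]; exists w; split => //.
  by rewrite -Hk mem_nth.
have /eqP H := Hel.2 w Hc.
rewrite -H (wdeg_nth j l) Hk -modzDmr sum_mod0 ?addr0 //.
by move=> m Hm; exact: HP _ (He m Hm).
Qed.

Lemma Sf_jj eps j u : elementary N deg (j, u) -> Sf eps j u j = 0.
Proof.
move=> Hel; case: (Sf eps j u j =P 0) => // /eqP /Sf_ex [w [l [Hc Hk _]]].
by have := Hel.1 w Hc; rewrite /= -{1}Hk mem_nth.
Qed.

Lemma E_sq eps j u : elementary N deg (j, u) ->
  elem_lin eps j u *m elem_lin eps j u = 1%:M.
Proof.
move=> Hel.
have NN : Nm eps j u *m Nm eps j u = 0.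
  apply/matrixP => a b; rewrite !mxE; apply: big1 => m _; rewrite !mxE.
  case: (a == j); last by rewrite mul0r.
  by case: ifP => [/eqP ->|_]; [rewrite Sf_jj // mul0r | rewrite mulr0].
have NN2 : Nm eps j u + Nm eps j u = 0.
  by apply/matrixP => a b; rewrite !mxE F2_addxx.
by rewrite elem_linE mulmxDl !mulmxDr !mul1mx !mulmx1 NN addr0 -addrA NN2 addr0.
Qed.

Lemma E_FP eps j u : elementary N deg (j, u) -> semimonotonic_elem h (j, u) -> Peps eps ->
  FPent h (elem_lin eps j u).
Proof.
move=> Hel Hsm HP i k; rewrite elem_linE mxE => /addF2_neq0 [|].
  by rewrite mxE; case: (i =P k) => [-> _|_]; [exact: lexx | rewrite mulr0n eqxx].
rewrite mxE; case: ifP => [/eqP ->|_]; last by rewrite eqxx.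
move=> /(Sf_props Hel HP) [w [Hc Hk _]].
exact: ltW (Hsm w Hc k Hk).
Qed.

Lemma E_HP eps j u : elementary N deg (j, u) -> Peps eps ->
  HPent N deg 0 (elem_lin eps j u).
Proof.
move=> Hel HP i k; rewrite elem_linE mxE addr0 => /addF2_neq0 [|].
  by rewrite mxE; case: (i =P k) => [-> _|_]; [by [] | rewrite mulr0n eqxx].
rewrite mxE; case: ifP => [/eqP ->|_]; last by rewrite eqxx.
by move=> /(Sf_props Hel HP) [w [Hc Hk ->]].
Qed.

Lemma Peps_push eps j u : elementary N deg (j, u) -> Peps eps -> Peps (push_aug eps j u).
Proof.
move=> Hel HP i; rewrite /push_aug.
case: ifP => [/eqP ->|_]; last exact: HP.
case Ej: (eps j) => /=; first by move=> _; exact: HP.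
move=> Ha; have : Ae eps u != 0 by rewrite Ae_aug Ha.
move/sum_F2_ex => [w /andP [Hc Hw]]; rewrite F2_nat_bool in Hw.
have /eqP := Hel.2 w Hc; rewrite (@wdeg_all0 eps w HP Hw) => H.
by rewrite -H.
Qed.

Lemma tame_elems_good eps es : Peps eps ->
  (forall e, e \in es -> elementary N deg e) ->
  (forall e, e \in es -> semimonotonic_elem h e) ->
  exists X, [/\ tame_lin_elems eps es *m X = 1%:M,
     FPent h (tame_lin_elems eps es), FPent h X,
     HPent N deg 0 (tame_lin_elems eps es) & HPent N deg 0 X].
Proof.
elim: es eps => [|[j u] es IH] eps HP Hel Hsm /=.
  by exists 1%:M; split; rewrite ?mulmx1 //; [exact: FP1 | exact: FP1 | exact: HP1 | exact: HP1].
have Hel0 : elementary N deg (j, u) by apply: Hel; rewrite mem_head.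
have Hsm0 : semimonotonic_elem h (j, u) by apply: Hsm; rewrite mem_head.
have [X [HX F1 F2 H1 H2]] := IH (push_aug eps j u) (Peps_push Hel0 HP)
  (fun e He => Hel e (mem_behead (s := (j,u) :: es) He)) (fun e He => Hsm e (mem_behead (s := (j,u) :: es) He)).
exists (X *m elem_lin eps j u); split.
- by rewrite !mulmxA -(mulmxA (elem_lin eps j u)) HX mulmx1 E_sq.
- exact: FP_mul (E_FP Hel0 Hsm0 HP) F1.
- exact: FP_mul F2 (E_FP Hel0 Hsm0 HP).
- by have := HP_mul (E_HP Hel0 HP) H1; rewrite add0r.
- by have := HP_mul H2 (E_HP Hel0 HP); rewrite add0r.
Qed.

End Elem.

Lemma D_FP (R : realFieldType) n (h : 'I_n -> R) d eps :
  is_filtered h d -> FPent h (lin_diff d eps).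
Proof.
move=> [Hpos Hf] i k; rewrite lin_diffE => /sum_F2_ex [w /andP [Hc Hl]].
have [w1 [w2 [Ew _ _]]] := linf_split Hl.
have := Hf (pgen i) w; rewrite deriv_pgen => /(_ Hc) [w' Hw' Hlt].
have Ew' : w' = [:: i].
  by move: Hw'; rewrite /coef /= addn0; case: ([:: i] =P w').
move: Hlt; rewrite Ew' /hword big_seq1 Ew big_cat big_cons /= => Hlt.
have H1 : 0 <= \sum_(j <- w1) h j by apply: sumr_ge0 => j _; exact: ltW.
have H2 : 0 <= \sum_(j <- w2) h j by apply: sumr_ge0 => j _; exact: ltW.
apply: ltW; apply: le_lt_trans Hlt.
lra.
Qed.

Lemma D_HP n N (deg : 'I_n -> int) d eps :
  is_DGA N deg d -> Peps N deg eps -> HPent N deg (-1) (lin_diff d eps).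
Proof.
move=> [Hh _] HP i k; rewrite lin_diffE => /sum_F2_ex [w /andP [Hc Hl]].
have [w1 [w2 [Ew H1 H2]]] := linf_split Hl.
have /eqP := Hh i w Hc; rewrite Ew.
have -> : wdeg deg (w1 ++ k :: w2) = wdeg deg w1 + (deg k + wdeg deg w2).
  by rewrite /wdeg big_cat big_cons.
rewrite -modzDml (wdeg_all0 HP H1) add0r -modzDmr (wdeg_all0 HP H2) addr0.
by [].
Qed.

Unset Implicit Arguments.
Set Strict Implicit.

Theorem lemma4p2 (R : realFieldType) (n N : nat) (deg : 'I_n -> int)
  (h : 'I_n -> R) (d : 'I_n -> ncpoly n) (eps : 'I_n -> bool)
  (es : seq ('I_n * ncpoly n)) (sigma : {perm 'I_n}) :
  is_DGA N deg d ->
  is_filtered h d ->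
  is_augmentation N deg d eps ->
  (forall e, e \in es -> elementary N deg e) ->
  relabeling N deg sigma ->
  (* semimonotonic *)
  (forall e, e \in es -> semimonotonic_elem h e) ->
  (forall i, h (sigma i) = h i) ->
  let L := tame_lin eps es sigma in
  let D := lin_diff d eps in
  let D' := invmx L *m D *m L in
  (* (A^., D') is a persistence module of chain complexes *)
  ((forall t v, inA h t v -> inA h t (v *m D')) /\
   D' *m D' = 0 /\
   (forall k v, homogv N deg k v -> homogv N deg (k - 1) (v *m D'))) /\
  (* L induces an isomorphism of persistence modules of chain complexes *)
  (L \in unitmx /\
   (forall t v, inA h t v -> inA h t (v *m L)) /\
   (forall t v, inA h t v -> inA h t (v *m invmx L)) /\
   (forall k v, homogv N deg k v -> homogv N deg k (v *m L)) /\
   (forall k v, homogv N deg k v -> homogv N deg k (v *m invmx L)) /\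
   D *m L = L *m D').
Proof.
move=> HDGA Hfil Haug Hel Hrel Hsm Hhs L D D'.
have HP : Peps N deg eps by move=> i /(Haug.1 i) /eqP; rewrite mod0z.
have [X [HX F1 F2 H1 H2]] := tame_elems_good HP Hel Hsm.
set Y := perm_mx (sigma^-1)%g *m X.
have LY : L *m Y = 1%:M.
  rewrite /L /tame_lin /Y mulmxA -(mulmxA (tame_lin_elems eps es)) -perm_mxM mulgV.
  by rewrite perm_mx1 mulmx1 HX.
have Lu : L \in unitmx := (mulmx1_unit LY).1.
have iL : invmx L = Y := invmx_uniq LY.
have Hhs' : forall i, h ((sigma^-1)%g i) = h i.
  by move=> i; rewrite -{2}(permKV sigma i) Hhs.
have FL : FPent h L := FP_mul F1 (FP_perm Hhs).
have FY : FPent h Y := FP_mul (FP_perm Hhs') F2.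
have HL : HPent N deg 0 L by have := HP_mul H1 (HP_perm Hrel); rewrite addr0.
have Hrel' : forall i, (deg ((sigma^-1)%g i) == deg i %[mod N%:Z])%Z.
  by move=> i; have := Hrel ((sigma^-1)%g i); rewrite permKV eq_sym.
have HY : HPent N deg 0 Y by have := HP_mul (HP_perm Hrel') H2; rewrite addr0.
have FD : FPent h D := D_FP (eps := eps) Hfil.
have HD : HPent N deg (-1) D := D_HP HDGA HP.
have DD0 : D *m D = 0.
  apply/matrixP => i k; rewrite !mxE /D.
  under eq_bigr do rewrite !lin_diffE.
  exact: DD_entry Haug.2 HDGA.2 i k.
split; [split; [|split]|split; [|split; [|split; [|split; [|split]]]]].
- by move=> t v Hv; apply: inA_mul Hv; rewrite /D' iL; apply: FP_mul (FP_mul FY FD) FL.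
- rewrite /D' iL.
  have -> : Y *m D *m L *m (Y *m D *m L) = Y *m D *m (L *m Y) *m D *m L by rewrite !mulmxA.
  by rewrite LY mulmx1 -(mulmxA Y D D) DD0 mulmx0 mul0mx.
- move=> k v Hv; rewrite /D' iL.
  by have := homogv_mul (HP_mul (HP_mul HY HD) HL) Hv; rewrite add0r addr0.
- exact: Lu.
- by move=> t v Hv; apply: inA_mul Hv.
- by move=> t v Hv; rewrite iL; apply: inA_mul Hv.
- by move=> k v Hv; have := homogv_mul HL Hv; rewrite addr0.
- by move=> k v Hv; rewrite iL; have := homogv_mul HY Hv; rewrite addr0.
- by rewrite /D' iL (mulmxA L (Y *m D) L) (mulmxA L Y D) LY mul1mx.
Qed.
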